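(* Let $\mathsf P$ be a network coding problem, $q$ a prime power, and $h\in\mathcal H[\mathcal S\cup\mathcal E]$ a $q$-representable function with $h\in\mathcal C_I(\mathsf P)\cap\mathcal C_T(\mathsf P)\cap\mathcal C_D(\mathsf P)$. Then the rate-capacity tuple $(\lambda,\omega)=\mathrm{proj}_{\mathsf P}[h]$ is $0$-achievable by $q$-linear network codes (i.e. $0$-achievable subject to the $q$-linearity constraint).
   Context: A network is $\mathsf G=(\mathcal V,\mathcal E)$, $\mathcal V$ a finite set of nodes, $\mathcal E$ a finite set of hyperedges, each $e$ with tail $\mathrm{tail}(e)\in\mathcal V$ and head $\mathrm{head}(e)\subseteq\mathcal V$, without directed cycles. A connection constraint $\mathsf M=(\mathcal S,O,D)$: finite source index set $\mathcal S$, $O:\mathcal S\to2^{\mathcal V}$ (where source $s$ is available), $D:\mathcal S\to2^{\mathcal V}$ (sinks of $s$). $\mathsf P=(\mathsf G,\mathsf M)$. Sources are imaginary edges with $\mathrm{head}(s)=O(s)$; $\mathrm{in}(e)=\{f\in\mathcal S\cup\mathcal E:\mathrm{tail}(e)\in\mathrm{head}(f)\}$, $\mathrm{in}(u)=\{f\in\mathcal S\cup\mathcal E:u\in\mathrm{head}(f)\}$. A $q$-linear network code is a family of random variables $\{Y_f:f\in\mathcal S\cup\mathcal E\}$ where each $Y_s$ is a row vector over $GF(q)$ with entries independent and uniform over $GF(q)$, the $Y_s$ are mutually independent, and each $Y_e$ is a row vector over $GF(q)$ that is a $GF(q)$-linear function of $(Y_f:f\in\mathrm{in}(e))$. $\mathrm{SP}(X)$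 is the support of $X$. A rate-capacity tuple $(\lambda,\omega)$ ($\lambda:\mathcal S\to\mathbb R_{\ge0}$, $\omega:\mathcal E\to\mathbb R_{\ge0}$) is $0$-achievable by $q$-linear network codes if there exist $q$-linear network codes $\{Y^n_f\}$ and $c_n>0$ with $\lim_nc_n\log|\mathrm{SP}(Y^n_s)|\ge\lambda(s)$, $\lim_nc_n\log|\mathrm{SP}(Y^n_e)|\le\omega(e)$, and $H(Y^n_s\mid Y^n_f,f\in\mathrm{in}(u))=0$ for all $n$, $s$, $u\in D(s)$. $\mathcal H[\mathcal S\cup\mathcal E]$ is the set of real functions on subsets of $\mathcal S\cup\mathcal E$, $h(\alpha\mid\beta)=h(\alpha\cup\beta)-h(\beta)$. $h$ is $q$-representable if there are subspaces $\mathbb U_i$ ($i\in\mathcal S\cup\mathcal E$) of a finite-dimensional $GF(q)$-vector space with $h(\alpha)=\dim\langle\mathbb U_i:i\in\alpha\rangle$ for all $\alpha$. $\mathcal C_I(\mathsf P)=\{h:h(\mathcal S)=\sum_sh(s)\}$, $\mathcal C_T(\mathsf P)=\{h:h(e\mid\mathrm{in}(e))=0\ \forall e\in\mathcal E\}$, $\mathcal C_D(\mathsf P)=\{h:h(s\mid\mathrm{in}(u))=0\ \forall s,u\in D(s)\}$. $\mathrm{proj}_{\mathsf P}[h]=(h(s),s\in\mathcal S;h(e),e\in\mathcal E)$. *)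

(* Defs.v *)
From HB Require Import structures.
From mathcomp Require Import all_boot all_order all_algebra.
From mathcomp Require Import all_classical all_reals all_analysis.
From mathcomp Require Import Rstruct Rstruct_topology.
Set Implicit Arguments. Unset Strict Implicit. Unset Printing Implicit Defensive.
Import Order.TTheory GRing.Theory Num.Theory.
Import numFieldNormedType.Exports.
Local Open Scope classical_set_scope.
Local Open Scope ring_scope.

Notation R := Rdefinitions.R.

Section Network.
Variables (V E S : finType) (tail : E -> V) (head : E -> {set V})
  (O D : S -> {set V}).

(* sources are imaginary edges with head(s) = O(s) *)
Definition hd (f : S + E) : {set V} :=
  match f with inl s => O s | inr e => head e end.

Definition in_node (u : V) : {set S + E} := [set f | u \in hd f].
Definition in_edge (e : E) : {set S + E} := in_node (tail e).

Definition step : rel V := fun u v => [exists e, (tail e == u) && (v \in head e)].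
Definition acyclic : Prop := forall u v, step u v -> ~~ connect step v u.

(* conditional entropy H(X | Y) (natural log) of random variables defined on a
   finite sample space Om equipped with the uniform probability:
   H(X|Y) = E[ log (P(Y = Y w) / P(X = X w, Y = Y w)) ]. *)
Definition condH (Om : finType) (A B : eqType) (X : Om -> A) (Y : Om -> B) : R :=
  \sum_(w : Om) (#|Om|%:R)^-1 *
     ln (#|[set w' | Y w' == Y w]%SET|%:R /
         #|[set w' | (X w' == X w) && (Y w' == Y w)]%SET|%:R).

Section Code.
Variable F : finFieldType.

(* sample space: the values of all source messages (row vectors over F) *)
Definition Omega (k : S + E -> nat) := {dffun forall s : S, 'rV[F]_(k (inl s))}.

(* A q-linear network code (q = #|F|): Y_s is the s-th coordinate of the uniform
   sample point (so the Y_s are independent, with i.i.d. uniform entries), and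
   each Y_e is an F-linear function of (Y_f : f in in(e)). *)
Record lincode := LinCode {
  cdim : S + E -> nat;
  Yv : forall f, Omega cdim -> 'rV[F]_(cdim f);
  Yv_src : forall s w, Yv (inl s) w = w s;
  Yv_lin : forall e, exists M : forall f, 'M[F]_(cdim f, cdim (inr e)),
      forall w, Yv (inr e) w = \sum_(f in in_edge e) Yv f w *m M f
}.
Arguments Yv l f _ : clear implicits.

Definition inputs (C : lincode) (u : V) (w : Omega (cdim C))
  : {dffun forall f : S + E, 'rV[F]_(cdim C f)} :=
  @finfun _ (fun f => 'rV[F]_(cdim C f))
    (fun f => if f \in in_node u then Yv C f w else 0).

Arguments inputs C u w : clear implicits.

Definition spcard (C : lincode) (f : S + E) : nat :=
  #|[set Yv C f w | w : Omega (cdim C)]%SET|.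

Definition zero_achievable_lin (lam : S -> R) (om : E -> R) : Prop :=
  exists (C : nat -> lincode) (c : nat -> R),
    (forall n, 0 < c n) /\
    (forall s, exists l : R,
        (fun n => c n * ln (spcard (C n) (inl s))%:R) @ \oo --> l /\ lam s <= l) /\
    (forall e, exists l : R,
        (fun n => c n * ln (spcard (C n) (inr e))%:R) @ \oo --> l /\ l <= om e) /\
    (forall n s u, u \in D s ->
        condH (Yv (C n) (inl s)) (inputs (C n) u) = 0).

(* h is q-representable: subspaces U_i (row spaces of d x d matrices) of F^d *)
Definition representable (h : {set S + E} -> R) : Prop :=
  exists (d : nat) (U : S + E -> 'M[F]_d),
    forall A : {set S + E}, h A = (\rank (\sum_(i in A) U i)%MS)%:R.

End Code.

Definition C_I (h : {set S + E} -> R) : Prop :=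
  h [set (inl s : S + E) | s : S]%SET = \sum_(s : S) h [set (inl s : S + E)]%SET.
Definition C_T (h : {set S + E} -> R) : Prop :=
  forall e : E, h (inr e |: in_edge e) - h (in_edge e) = 0.
Definition C_D (h : {set S + E} -> R) : Prop :=
  forall (s : S) (u : V), u \in D s -> h (inl s |: in_node u) - h (in_node u) = 0.

Definition proj_src (h : {set S + E} -> R) (s : S) : R := h [set (inl s : S + E)]%SET.
Definition proj_edge (h : {set S + E} -> R) (e : E) : R := h [set (inr e : S + E)]%SET.

End Network.

(* Main.v *)
Require Import Defs.
From HB Require Import structures.
From mathcomp Require Import all_boot all_order all_algebra.
From mathcomp Require Import all_classical all_reals all_analysis.
From mathcomp Require Import Rstruct Rstruct_topology.
Set Implicit Arguments. Unset Strict Implicit. Unset Printing Implicit Defensive.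
Import Order.TTheory GRing.Theory Num.Theory.
Local Open Scope ring_scope.

Section Constr.
Variables (V E S : finType) (tail : E -> V) (head : E -> {set V}) (O : S -> {set V}).
Variables (F : finFieldType) (d : nat) (U : S + E -> 'M[F]_d).
Hypothesis Hdir : mxdirect (\sum_(s : S) U (inl s)).

Definition cd (i : S + E) := \rank (U i).
Definition B (i : S + E) : 'M[F]_(cd i, d) := row_base (U i).

Lemma B_sub i : (B i <= U i)%MS.
Proof. by rewrite /B eq_row_base. Qed.
Lemma sub_B i : (U i <= B i)%MS.
Proof. by rewrite /B eq_row_base. Qed.

Lemma Tex t : exists T : 'M[F]_(d, cd (inl t)),
  B (inl t) *m T = 1%:M /\ forall s, s != t -> B (inl s) *m T = 0.
Proof.
set W := (\sum_(j | j != t) U (inl j))%MS.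
have Hcap : (U (inl t) :&: W = 0)%MS.
  by have := mxdirect_sumsP Hdir t isT.
set K := cokermx W.
have : row_free (B (inl t) *m K).
  rewrite -kermx_eq0; apply/eqP.
  set Z := kermx _.
  have HZ : Z *m (B (inl t) *m K) = 0 by apply/sub_kermxP.
  have H1 : (Z *m B (inl t) <= W)%MS by rewrite submxE -mulmxA HZ.
  have H2 : (Z *m B (inl t) <= U (inl t))%MS.
    exact: submx_trans (submxMl _ _) (B_sub _).
  have : (Z *m B (inl t) <= U (inl t) :&: W)%MS by rewrite sub_capmx H1 H2.
  rewrite Hcap submx0 => /eqP H0.
  apply: (row_free_inj (row_base_free (U (inl t)))).
  by rewrite /= mul0mx.
case/row_freeP => X HX.
exists (K *m X); split; first by rewrite mulmxA.
move=> s st.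
have : (B (inl s) <= W)%MS.
  apply: submx_trans (B_sub _) _.
  exact: (sumsmx_sup s).
by rewrite submxE /K => /eqP H; rewrite mulmxA H mul0mx.
Qed.

Definition T t : 'M[F]_(d, cd (inl t)) := proj1_sig (cid (Tex t)).
Lemma T1 t : B (inl t) *m T t = 1%:M.
Proof. by have [] := proj2_sig (cid (Tex t)). Qed.
Lemma T0 t s : s != t -> B (inl s) *m T t = 0.
Proof. by have [_ H] := proj2_sig (cid (Tex t)); apply: H. Qed.

Definition xw (w : Omega F cd) : 'rV[F]_d := \sum_t w t *m (T t)^T.

Definition Yf (f : S + E) (w : Omega F cd) : 'rV[F]_(cd f) :=
  match f return 'rV[F]_(cd f) with
  | inl s => w s
  | inr e => xw w *m (B (inr e))^T
  end.

Lemma YfE f w : Yf f w = xw w *m (B f)^T.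
Proof.
case: f => [s|e] //=.
rewrite /xw mulmx_suml (bigD1 s) //= big1 ?addr0.
  by rewrite -mulmxA -trmx_mul T1 trmx1 mulmx1.
by move=> t ts; rewrite -mulmxA -trmx_mul T0 1?eq_sym // trmx0 mulmx0.
Qed.

Lemma dep i (A : {set S + E}) : (U i <= \sum_(j in A) U j)%MS ->
  exists M : forall f, 'M[F]_(cd f, cd i),
    forall w, Yf i w = \sum_(f in A) Yf f w *m M f.
Proof.
move=> HU.
have : (B i <= \sum_(j in A) U j)%MS by apply: submx_trans (B_sub _) HU.
case/sub_sumsmxP => u Hu.
exists (fun f => (u f *m U f *m pinvmx (B f))^T) => w.
rewrite YfE Hu raddf_sum /= mulmx_sumr; apply: eq_bigr => f _.
rewrite YfE -mulmxA -trmx_mul mulmxKpV //.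
exact: submx_trans (submxMl _ _) (sub_B _).
Qed.

Lemma Yf_lin_ok (e : E) :
  (U (inr e) <= \sum_(j in in_edge tail head O e) U j)%MS ->
  exists M : forall f, 'M[F]_(cd f, cd (inr e)),
    forall w, Yf (inr e) w = \sum_(f in in_edge tail head O e) Yf f w *m M f.
Proof. exact: dep. Qed.

Variable HT : forall e, (U (inr e) <= \sum_(j in in_edge tail head O e) U j)%MS.

Definition code : lincode tail head O F :=
  @LinCode _ _ _ tail head O F cd Yf (fun s w => erefl) (fun e => dep (HT e)).

Definition w0 : Omega F cd := @finfun S (fun t => 'rV[F]_(cd (inl t))) (fun t => 0).

Lemma spcard_src s : spcard code (inl s) = (#|F| ^ cd (inl s))%N.
Proof.
rewrite /spcard.
have -> : ([set @Yv _ _ _ _ _ _ _ code (inl s) w | w : Omega F cd] = [set: 'rV[F]_(cd (inl s))])%SET.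
  apply/setP => v; rewrite inE.
  apply/imsetP.
exists (@finfun S (fun t => 'rV[F]_(cd (inl t))) (fun t => v *m (T s)^T *m (B (inl t))^T)) => //=.
  by rewrite ffunE -mulmxA -trmx_mul T1 trmx1 mulmx1.
by rewrite cardsT card_mx mul1n.
Qed.

Lemma spcard_edge e : (0 < spcard code (inr e))%N /\
   (spcard code (inr e) <= #|F| ^ cd (inr e))%N.
Proof.
split.
  apply/card_gt0P; exists (@Yv _ _ _ _ _ _ _ code (inr e) w0); exact: imset_f.
rewrite -[X in (_ ^ X)%N](mul1n (cd (inr e))) -card_mx.
exact: max_card.
Qed.

Lemma decod s u : (U (inl s) <= \sum_(j in in_node head O u) U j)%MS ->
  condH (@Yv _ _ _ _ _ _ _ code (inl s)) (@inputs _ _ _ _ _ _ _ code u) = 0.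
Proof.
move=> /dep [M HM].
rewrite /condH big1 // => w _.
set A1 := [set w' | _ ]%SET; set A2 := [set w' | _ ]%SET.
have -> : A1 = A2.
  apply/setP => w'; rewrite !inE.
  case Hin: (@inputs _ _ _ _ _ _ _ code u w' == @inputs _ _ _ _ _ _ _ code u w); rewrite ?andbT ?andbF //.
  apply/esym/eqP; change (Yf (inl s) w' = Yf (inl s) w).
  rewrite (HM w) (HM w'); apply: eq_bigr => f Hf.
  move/eqP: Hin => Hin.
  by have := @congr1 _ _ (fun g : {dffun forall f : S + E, 'rV[F]_(cd f)} => g f) _ _ Hin; rewrite /= !ffunE Hf => H; exact: (congr1 (fun y => y *m M f) H).
have : (0 < #|A2|)%N by apply/card_gt0P; exists w; rewrite inE !eqxx.
rewrite lt0n => H.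
by rewrite divff ?ln1 ?mulr0 // pnatr_eq0.
Qed.
End Constr.

Lemma rank_sub (S' : finType) (F : fieldType) d (U : S' -> 'M[F]_d) i (A : {set S'}) :
  \rank (\sum_(j in i |: A) U j)%MS = \rank (\sum_(j in A) U j)%MS ->
  (U i <= \sum_(j in A) U j)%MS.
Proof.
move=> Hr.
have H1 : (\sum_(j in A) U j <= \sum_(j in i |: A) U j)%MS.
  by apply/sumsmx_subP => j Hj; apply: (sumsmx_sup j) => //; rewrite setU1r.
have := (mxrank_leqif_sup H1).2; rewrite Hr eqxx => /esym H2.
apply: submx_trans H2.
by apply: (sumsmx_sup i) => //; rewrite setU11.
Qed.

Lemma natR_inj (m n : nat) : (m%:R : R) = n%:R -> m = n.
Proof. by move/eqP; rewrite eqr_nat => /eqP. Qed.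

Theorem proposition4 (V E S : finType) (tail : E -> V) (head : E -> {set V})
  (O D : S -> {set V}) (Hacyc : acyclic tail head)
  (F : finFieldType) (h : {set S + E} -> R) :
  representable F h ->
  C_I h -> C_T tail head O h -> C_D head O D h ->
  zero_achievable_lin tail head O D F (proj_src h) (proj_edge h).
Proof.
move=> [d [U hU]] HI HT HD.
have Hdir : mxdirect (\sum_(s : S) U (inl s)).
  move: HI; rewrite /C_I.
  under eq_bigr => s _ do rewrite hU big_set1.
  rewrite hU.
  rewrite big_imset /=; last by move=> a b _ _ [].
  rewrite -natr_sum => /natR_inj H.
  rewrite mxdirectE /=. apply/eqP. rewrite -H. 
  by apply: congr1; apply: eq_bigl => i; rewrite inE.
have HT' : forall e, (U (inr e) <= \sum_(j in in_edge tail head O e) U j)%MS.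
  move=> e; apply: rank_sub; apply: natR_inj; rewrite -!hU; apply/eqP.
  by rewrite -subr_eq0; apply/eqP; apply: HT.
have HD' : forall s u, u \in D s -> (U (inl s) <= \sum_(j in in_node head O u) U j)%MS.
  move=> s u Hu; apply: rank_sub; apply: natR_inj; rewrite -!hU; apply/eqP.
  by rewrite -subr_eq0; apply/eqP; apply: HD.
have q1 : (1 : R) < #|F|%:R by rewrite ltr1n card_finNzRing_gt1.
have q0 : (0 : R) < #|F|%:R by apply: lt_trans q1.
have lq : 0 < ln (#|F|%:R : R) by apply: ln_gt0.
exists (fun _ => code Hdir HT'), (fun _ => (ln (#|F|%:R : R))^-1).
split; first by move=> _; rewrite invr_gt0.
split.
  move=> s; eexists; split; first exact: cvg_cst.
  rewrite /proj_src hU big_set1 spcard_src natrX lnXn // mulrnAr mulVf ?gt_eqF //.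
split.
  move=> e; eexists; split; first exact: cvg_cst.
  have [H0 H1] := spcard_edge Hdir HT' e.
  rewrite /proj_edge hU big_set1.
  apply: (@le_trans _ _ ((ln (#|F|%:R : R))^-1 * ln ((#|F|%:R : R) ^+ cd U (inr e)))).
    apply: ler_wpM2l; first by rewrite invr_ge0 ltW.
    rewrite ler_ln ?posrE ?ltr0n ?exprn_gt0 //.
    by rewrite -natrX ler_nat.
  by rewrite lnXn // mulrnAr mulVf ?gt_eqF.
move=> n s u Hu; exact: decod (HD' s u Hu).
Qed.
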